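(* Let $\mathfrak A\subseteq\mathfrak G_\bullet$ be a log-free subgrid. Then there is a hereditary log-free subgrid $\mathfrak B$ with $\mathfrak B\supseteq\mathfrak A$ such that the height of $\mathfrak B$ equals the height of $\mathfrak A$.
   Context: Log-free transmonomials: $\mathfrak G_0=\{x^b:b\in\mathbb R\}$, and for $N\ge1$, $\mathfrak G_N=\{x^be^L: b\in\mathbb R,\ L \text{ a purely large transseries with } \operatorname{supp}L\subseteq\mathfrak G_{N-1}\}$; $\mathfrak G_\bullet=\bigcup_N\mathfrak G_N$, with the usual ordering of transmonomials. A ratio set is a finite set of monomials $\prec1$; a grid is a set $\mathfrak J^{\boldsymbol\mu,\mathbf m}=\{\boldsymbol\mu^{\mathbf k}:\mathbf k\in\mathbb Z^n,\mathbf k\ge\mathbf m\}$ for a ratio set $\boldsymbol\mu=\{\mu_1,\dots,\mu_n\}$, and a subgrid is a subset of a grid. The height of a log-free subgrid is the least $N$ with $\mathfrak A\subseteq\mathfrak G_N$. A log-free subgrid $\mathfrak B$ is hereditary if for every $x^be^L\in\mathfrak B$ ($b\in\mathbb R$, $L$ purely large log-free) we have $\operatorname{supp}L\subseteq\mathfrak B$. *)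

(* Defs.v *)
From Stdlib Require Import Reals ZArith List ClassicalEpsilon.
Open Scope R_scope.

(** A "level" packages a carrier of pre-monomials together with a validity
  predicate (which pre-monomials are genuine log-free transmonomials of the
  level), the group structure (1, product, inverse) and the strict ordering
  [lt m n] meaning m ≺ n.

  Level 0: carrier R, the real b standing for x^b; x^a ≺ x^b iff a < b.
  Level N+1: carrier R * (car(level N) -> R); the pair (b, L) stands for
  x^b e^L, where L is a formal series over the level-N monomials (its
  coefficient function).  (b,L) is valid iff L is a purely large grid-based
  (log-free) transseries with support in G_N. *)

Record lvl := Lvl {
  car : Type;
  valid : car -> Prop;
  one : car;
  mul : car -> car -> car;
  inv : car -> car;
  lt : car -> car -> Prop
}.

Definition zpow (P : lvl) (u : car P) (k : Z) : car P :=
  match k with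
  | Z0 => one P
  | Zpos p => Nat.iter (Pos.to_nat p) (mul P u) (one P)
  | Zneg p => Nat.iter (Pos.to_nat p) (mul P (inv P u)) (one P)
  end.

Definition monpow (P : lvl) (mu : list (car P)) (k : list Z) : car P :=
  fold_right (fun uj acc => mul P (zpow P (fst uj) (snd uj)) acc) (one P)
    (combine mu k).

Definition ratio_set (P : lvl) (mu : list (car P)) : Prop :=
  Forall (fun u => valid P u /\ lt P u (one P)) mu.

Definition grid (P : lvl) (mu : list (car P)) (lo : list Z) : car P -> Prop :=
  fun y => exists k : list Z,
      length k = length mu /\ Forall2 Z.le lo k /\ y = monpow P mu k.

Definition subgrid (P : lvl) (S : car P -> Prop) : Prop :=
  exists (mu : list (car P)) (lo : list Z),
    ratio_set P mu /\ length lo = length mu /\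
    (forall y, S y -> grid P mu lo y).

Definition supp {T : Type} (f : T -> R) : T -> Prop := fun m => f m <> 0.

Definition purely_large (P : lvl) (L : car P -> R) : Prop :=
  subgrid P (supp L) /\
  (forall m, supp L m -> valid P m /\ lt P (one P) m).

Definition leadpos (P : lvl) (f : car P -> R) : Prop :=
  exists m, 0 < f m /\ (forall m', f m' <> 0 -> m' <> m -> lt P m' m).

Definition base_lvl : lvl :=
  Lvl R (fun _ => True) 0 Rplus Ropp Rlt.

Definition mulS (P : lvl) (x y : R * (car P -> R)) : R * (car P -> R) :=
  (fst x + fst y, fun m => snd x m + snd y m).
Definition invS (P : lvl) (x : R * (car P -> R)) : R * (car P -> R) :=
  (- fst x, fun m => - snd x m).

(** x^c e^N ≺ 1 iff N < 0, or N = 0 and c < 0. *)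
Definition smallS (P : lvl) (x : R * (car P -> R)) : Prop :=
  leadpos P (fun m => - snd x m) \/ (snd x = (fun _ => 0) /\ fst x < 0).

Definition succ_lvl (P : lvl) : lvl :=
  Lvl (R * (car P -> R))
      (fun x => purely_large P (snd x))
      (0, fun _ => 0)
      (mulS P) (invS P)
      (fun x y => smallS P (mulS P x (invS P y))).

(** level N : pre-monomials of height <= N, valid ones form G_N. *)
Fixpoint level (n : nat) : lvl :=
  match n with
  | O => base_lvl
  | S n' => succ_lvl (level n')
  end.

Definition push {A B : Type} (e : A -> B) (f : A -> R) : B -> R :=
  fun y => match excluded_middle_informative (exists x, e x = y) with
           | left h => f (proj1_sig (constructive_indefinite_description _ h))
           | right _ => 0
           end.

Fixpoint emb (n : nat) : car (level n) -> car (level (S n)) :=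
  match n as n0 return car (level n0) -> car (level (S n0)) with
  | O => fun b => (b, fun _ => 0)
  | S n' => fun x => (fst x, push (emb n') (snd x))
  end.

Fixpoint emb_up (n d : nat) : car (level n) -> car (level (d + n)) :=
  match d as d0 return car (level n) -> car (level (d0 + n)) with
  | O => fun x => x
  | S d' => fun x => emb (d' + n) (emb_up n d' x)
  end.

Fixpoint inG (N k : nat) {struct N} : car (level N) -> Prop :=
  match N as N0 return car (level N0) -> Prop with
  | O => fun m => valid (level O) m
  | S N' => fun m => valid (level (S N')) m /\
      ((k < S N')%nat -> exists m0, emb N' m0 = m /\ inG N' k m0)
  end.

Definition logfree_subgrid (N : nat) (A : car (level N) -> Prop) : Prop :=
  (forall m, A m -> valid (level N) m) /\ subgrid (level N) A.

Definition is_height (N : nat) (A : car (level N) -> Prop) (h : nat) : Prop :=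
  (forall m, A m -> inG N h m) /\
  (forall k, (forall m, A m -> inG N k m) -> (h <= k)%nat).

Definition hereditary (N : nat) : (car (level N) -> Prop) -> Prop :=
  match N as N0 return (car (level N0) -> Prop) -> Prop with
  | O => fun _ => True
  | S n => fun B => forall (x : car (level (S n))), B x ->
             forall m, snd x m <> 0 -> B (emb n m)
  end.

(* Main.v *)
Require Import Defs.
From Stdlib Require Import Reals ZArith List ClassicalEpsilon Classical FunctionalExtensionality Lra Lia.
Open Scope R_scope.

Lemma push_inj {A B : Type} (e : A -> B) (f : A -> R) x :
  (forall a b, e a = e b -> a = b) -> push e f (e x) = f x.
Proof.
  intros Hi. unfold push. destruct excluded_middle_informative as [h|h].
  - destruct constructive_indefinite_description as [x' Hx']. simpl. now rewrite (Hi _ _ Hx').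
  - exfalso. apply h. now exists x.
Qed.

Lemma push_out {A B : Type} (e : A -> B) (f : A -> R) y :
  push e f y <> 0 -> exists x, e x = y /\ f x <> 0.
Proof.
  unfold push. destruct excluded_middle_informative as [h|h].
  - destruct constructive_indefinite_description as [x' Hx']. simpl. intros. now exists x'.
  - intros H; now exfalso.
Qed.

Lemma push_add {A B : Type} (e : A -> B) (f g : A -> R) y :
  push e (fun a => f a + g a) y = push e f y + push e g y.
Proof.
  unfold push. destruct excluded_middle_informative as [h|h].
  - reflexivity.
  - ring.
Qed.

Lemma push_opp {A B : Type} (e : A -> B) (f : A -> R) y :
  push e (fun a => - f a) y = - push e f y.
Proof.
  unfold push. destruct excluded_middle_informative as [h|h].
  - reflexivity.
  - ring.
Qed.

Lemma push_zero {A B : Type} (e : A -> B) y :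
  push e (fun _ => 0) y = 0.
Proof.
  unfold push. destruct excluded_middle_informative as [h|h]; reflexivity.
Qed.

Lemma emb_one n : emb n (one (level n)) = one (level (S n)).
Proof.
  destruct n; simpl. reflexivity.
  f_equal. apply functional_extensionality; intro; apply push_zero.
Qed.

Lemma emb_mul n x y : emb n (mul (level n) x y) = mul (level (S n)) (emb n x) (emb n y).
Proof.
  destruct n; simpl.
  - unfold mulS; simpl. f_equal. apply functional_extensionality; intro; ring.
  - unfold mulS; simpl. f_equal. apply functional_extensionality; intro; apply push_add.
Qed.

Lemma emb_inv n x : emb n (inv (level n) x) = inv (level (S n)) (emb n x).
Proof.
  destruct n; simpl.
  - unfold invS; simpl. f_equal. apply functional_extensionality; intro; ring.
  - unfold invS; simpl. f_equal. apply functional_extensionality; intro; apply push_opp.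
Qed.

Lemma emb_inj n : forall x y, emb n x = emb n y -> x = y.
Proof.
  induction n; simpl; intros x y H.
  - now injection H.
  - destruct x as [a f], y as [b g]. simpl in H. injection H as H1 H2. subst b.
    f_equal. apply functional_extensionality; intro m.
    transitivity (push (emb n) f (emb n m)). symmetry; apply push_inj; exact IHn. etransitivity. exact (f_equal (fun h => h (emb n m)) H2). apply push_inj; exact IHn.
Qed.

Lemma emb_zpow n u j : emb n (zpow (level n) u j) = zpow (level (S n)) (emb n u) j.
Proof.
  destruct j; simpl.
  - apply emb_one.
  - induction (Pos.to_nat p); simpl. apply emb_one. rewrite emb_mul, IHn0. reflexivity.
  - induction (Pos.to_nat p); simpl. apply emb_one. rewrite emb_mul, IHn0, emb_inv. reflexivity.
Qed.

Lemma monpow_cons P u mu j k : monpow P (u :: mu) (j :: k) = mul P (zpow P u j) (monpow P mu k).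
Proof. reflexivity. Qed.
Lemma monpow_nil_l P k : monpow P nil k = one P.
Proof. reflexivity. Qed.
Lemma monpow_nil_r P mu : monpow P mu nil = one P.
Proof. destruct mu; reflexivity. Qed.

Lemma emb_monpow n mu k : emb n (monpow (level n) mu k) = monpow (level (S n)) (map (emb n) mu) k.
Proof.
  revert k; induction mu as [|u mu IH]; intros k.
  - rewrite !monpow_nil_l. apply emb_one.
  - destruct k as [|j k]. rewrite !monpow_nil_r. apply emb_one.
    change (map (emb n) (u :: mu)) with (emb n u :: map (emb n) mu).
    rewrite !monpow_cons, emb_mul, emb_zpow, IH. reflexivity.
Qed.

Lemma smallS_emb n
  (IH : forall x y, lt (level n) x y -> lt (level (S n)) (emb n x) (emb n y))
  (z : car (level (S n))) :
  smallS (level n) z -> smallS (level (S n)) (emb (S n) z).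
Proof.
  destruct z as [a f]. change (emb (S n) (a,f)) with (a, push (emb n) f).
  unfold smallS; simpl. intros [[m [Hm H]] | [Hf Ha]].
  - left. exists (emb n m). split.
    + rewrite push_inj by apply emb_inj. exact Hm.
    + intros m' Hm' Hne.
      assert (Hp : push (emb n) f m' <> 0) by (intro E; apply Hm'; apply Ropp_eq_0_compat; exact E).
      destruct (push_out _ _ _ Hp) as [x [Ex Hx]]. subst m'.
      apply IH. apply H. intro E; apply Hx; lra.
      intro E; apply Hne; now subst.
  - right. split; [|exact Ha]. subst f. apply functional_extensionality; intro; apply push_zero.
Qed.

Lemma emb_lt n : forall x y, lt (level n) x y -> lt (level (S n)) (emb n x) (emb n y).
Proof.
  induction n; intros x y H.
  - change (x < y) in H. unfold lt; simpl. unfold smallS, mulS, invS; simpl. right. split.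
    apply functional_extensionality; intro; ring. lra.
  - change (smallS (level (S n)) (mul (level (S (S n))) (emb (S n) x) (inv (level (S (S n))) (emb (S n) y)))).
    rewrite <- emb_inv, <- emb_mul.
    change (smallS (level n) (mul (level (S n)) x (inv (level (S n)) y))) in H.
    apply smallS_emb; assumption.
Qed.

Lemma subgrid_sub P (S T : car P -> Prop) : subgrid P S -> (forall y, T y -> S y) -> subgrid P T.
Proof.
  intros [mu [lo [H1 [H2 H3]]]] H. exists mu, lo. repeat split; auto.
Qed.

Lemma subgrid_empty P : subgrid P (fun _ => False).
Proof. exists nil, nil. split; [constructor|]. split; [reflexivity|]. intros y []. Qed.

Lemma combine_app' {A B : Type} (l1 l2 : list A) (k1 k2 : list B) :
  length l1 = length k1 -> combine (l1 ++ l2) (k1 ++ k2) = combine l1 k1 ++ combine l2 k2.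
Proof.
  revert k1; induction l1; intros [|b k1] H; simpl in *; try discriminate; auto.
  f_equal. apply IHl1. lia.
Qed.

Definition stepf P := fun (uj : car P * Z) (acc : car P) => mul P (zpow P (fst uj) (snd uj)) acc.

Lemma monpow_app P mu1 mu2 k1 k2 : length k1 = length mu1 ->
  monpow P (mu1 ++ mu2) (k1 ++ k2) = fold_right (stepf P) (monpow P mu2 k2) (combine mu1 k1).
Proof.
  intros H. unfold monpow. rewrite combine_app' by lia. rewrite fold_right_app. reflexivity.
Qed.

Lemma fold_zeros P (Hone : forall x, mul P (one P) x = x) l acc :
  fold_right (stepf P) acc (combine l (repeat 0%Z (length l))) = acc.
Proof.
  induction l; simpl; auto. unfold stepf at 1. simpl. rewrite Hone. exact IHl.
Qed.

Lemma F2_min lo k : Forall2 Z.le lo k -> Forall2 Z.le (map (Z.min 0) lo) k.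
Proof. induction 1; simpl; constructor; auto. lia. Qed.

Lemma F2_rep lo : Forall2 Z.le (map (Z.min 0) lo) (repeat 0%Z (length lo)).
Proof. induction lo; simpl; constructor; auto. lia. Qed.

Lemma subgrid_union P (Hone : forall x, mul P (one P) x = x) (S1 S2 : car P -> Prop) :
  subgrid P S1 -> subgrid P S2 -> subgrid P (fun y => S1 y \/ S2 y).
Proof.
  intros [mu1 [lo1 [R1 [L1 G1]]]] [mu2 [lo2 [R2 [L2 G2]]]].
  exists (mu1 ++ mu2), (map (Z.min 0) lo1 ++ map (Z.min 0) lo2).
  split; [apply Forall_app; auto|]. split.
  { rewrite !length_app, !length_map. lia. }
  intros y [Hy|Hy].
  - destruct (G1 y Hy) as [k [Hk1 [Hk2 ->]]].
    exists (k ++ repeat 0%Z (length mu2)). split; [rewrite !length_app, repeat_length; lia|].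
    split. apply Forall2_app. now apply F2_min. rewrite <- L2. apply F2_rep.
    rewrite monpow_app by lia.
    assert (E: monpow P mu2 (repeat 0%Z (length mu2)) = one P).
    { unfold monpow. apply (fold_zeros P Hone mu2 (one P)). }
    rewrite E. reflexivity.
  - destruct (G2 y Hy) as [k [Hk1 [Hk2 ->]]].
    exists (repeat 0%Z (length mu1) ++ k). split; [rewrite !length_app, repeat_length; lia|].
    split. apply Forall2_app. rewrite <- L1. apply F2_rep. now apply F2_min.
    rewrite monpow_app by (rewrite repeat_length; lia).
    symmetry. apply fold_zeros. exact Hone.
Qed.

Lemma subgrid_union_list {U : Type} P (Hone : forall x, mul P (one P) x = x) (F : U -> car P -> Prop) (l : list U) :
  (forall u, In u l -> subgrid P (F u)) -> subgrid P (fun m => exists u, In u l /\ F u m).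
Proof.
  induction l as [|a l IH]; intros H.
  - eapply subgrid_sub. apply subgrid_empty. intros y [u [[] _]].
  - eapply subgrid_sub. apply (subgrid_union P Hone (F a)).
    apply H; simpl; auto. apply IH. intros; apply H; simpl; auto.
    intros y [u [[<-|Hu] Hy]]; [left; auto | right; exists u; auto].
Qed.

Lemma one_l n x : mul (level n) (one (level n)) x = x.
Proof.
  destruct n; simpl. ring. unfold mulS. destruct x; simpl. f_equal. ring.
  apply functional_extensionality; intro; ring.
Qed.

Lemma subgrid_emb n (Hv : forall x, valid (level n) x -> valid (level (S n)) (emb n x))
  (Sg : car (level n) -> Prop) :
  subgrid (level n) Sg -> subgrid (level (S n)) (fun z => exists y, Sg y /\ z = emb n y).
Proof.
  intros [mu [lo [R1 [L1 G1]]]]. exists (map (emb n) mu), lo.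
  split.
  { unfold ratio_set in *. apply Forall_map. eapply Forall_impl; [|exact R1].
    intros u [Hu Hl]. split. apply Hv; auto. rewrite <- emb_one. apply emb_lt; auto. }
  split. rewrite length_map; auto.
  intros z [y [Hy ->]]. destruct (G1 y Hy) as [k [Hk1 [Hk2 ->]]].
  exists k. split. rewrite length_map; auto. split; auto. apply emb_monpow.
Qed.

Lemma emb_valid n : forall x, valid (level n) x -> valid (level (S n)) (emb n x).
Proof.
  induction n; intros x Hx.
  - simpl. unfold purely_large. split. eapply subgrid_sub. apply subgrid_empty.
    unfold supp; simpl; auto. unfold supp; simpl. intros m H; now exfalso.
  - destruct x as [a f]. change (purely_large (level n) f) in Hx.
    change (purely_large (level (S n)) (push (emb n) f)).
    destruct Hx as [Hs Hl]. split.
    + eapply subgrid_sub. apply (subgrid_emb n IHn _ Hs).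
      intros y Hy. unfold supp in Hy. destruct (push_out _ _ _ Hy) as [x [<- Hx]].
      exists x; split; auto.
    + intros m Hm. unfold supp in Hm. destruct (push_out _ _ _ Hm) as [x [<- Hx]].
      destruct (Hl x Hx) as [Hv Hlt]. split. apply IHn; auto.
      rewrite <- emb_one. apply emb_lt; auto.
Qed.

Lemma inG_valid n k y : inG n k y -> valid (level n) y.
Proof. destruct n; simpl; tauto. Qed.

Lemma inG_mono n : forall j k y, inG n j y -> (j <= k)%nat -> inG n k y.
Proof.
  induction n; intros j k y H Hjk; simpl in *; auto.
  destruct H as [Hv H]. split; auto. intros Hk.
  destruct (H ltac:(lia)) as [m0 [E Hm0]]. exists m0; split; auto. eapply IHn; eauto.
Qed.

Lemma inG_emb n k y : inG n k y -> inG (S n) k (emb n y).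
Proof.
  intros H. change (valid (level (S n)) (emb n y) /\ ((k < S n)%nat -> exists m0, emb n m0 = emb n y /\ inG n k m0)).
  split. apply emb_valid. eapply inG_valid; eauto.
  intros _. exists y; auto.
Qed.

Lemma inG_top N m : valid (level N) m -> inG N N m.
Proof. destruct N; simpl; auto. intros H; split; auto. intros; lia. Qed.

Lemma inG_snd n : forall k (x : car (level (S n))) m, inG (S n) k x -> snd x m <> 0 -> inG n (pred k) m.
Proof.
  induction n; intros k x m H Hm.
  - simpl. exact I.
  - change (valid (level (S (S n))) x /\ ((k < S (S n))%nat -> exists m0, emb (S n) m0 = x /\ inG (S n) k m0)) in H.
    destruct H as [Hv H].
    change (valid (level (S n)) m /\ ((pred k < S n)%nat -> exists m0, emb n m0 = m /\ inG n (pred k) m0)).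
    split.
    + destruct Hv as [_ Hv]. apply (Hv m Hm).
    + intros Hk. destruct (H ltac:(lia)) as [m0 [E Hm0]]. subst x.
      change (push (emb n) (snd m0) m <> 0) in Hm.
      destruct (push_out _ _ _ Hm) as [m1 [E1 H1]]. exists m1. split; auto.
      eapply IHn; eauto.
Qed.

Lemma snd_zpow_zero P (u : car (succ_lvl P)) j m : snd u m = 0 -> snd (zpow (succ_lvl P) u j) m = 0.
Proof.
  intros H. destruct j; simpl; auto.
  - induction (Pos.to_nat p). reflexivity.
    transitivity (snd u m + snd (Nat.iter n (mulS P u) (0, fun _ => 0)) m). reflexivity.
    rewrite H, IHn; ring.
  - induction (Pos.to_nat p). reflexivity.
    transitivity (- snd u m + snd (Nat.iter n (mulS P (invS P u)) (0, fun _ => 0)) m). reflexivity.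
    rewrite H, IHn; ring.
Qed.

Lemma snd_monpow_zero P (mu : list (car (succ_lvl P))) k m :
  (forall u, In u mu -> snd u m = 0) -> snd (monpow (succ_lvl P) mu k) m = 0.
Proof.
  revert k; induction mu as [|u mu IH]; intros k H.
  - reflexivity.
  - destruct k as [|j k]. reflexivity.
    rewrite monpow_cons. change (snd (zpow (succ_lvl P) u j) m + snd (monpow (succ_lvl P) mu k) m = 0).
    rewrite snd_zpow_zero, IH. ring. intros; apply H; simpl; auto. apply H; simpl; auto.
Qed.

Lemma closure n : forall A : car (level n) -> Prop, logfree_subgrid n A ->
  exists B, logfree_subgrid n B /\ hereditary n B /\ (forall m, A m -> B m) /\
    (forall k, (forall m, A m -> inG n k m) -> forall m, B m -> inG n k m).
Proof.
  induction n; intros A HA.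
  - exists A. repeat split; auto; apply HA.
  - destruct HA as [HAv HAs].
    set (Sg := fun m : car (level n) => exists x, A x /\ snd x m <> 0).
    assert (HS : logfree_subgrid n Sg).
    { split.
      - intros m [x [Hx Hm]]. destruct (HAv x Hx) as [_ Hl]. apply (Hl m Hm).
      - destruct HAs as [mu [lo [Rm [Lm Gm]]]].
        eapply subgrid_sub.
        apply (subgrid_union_list (level n) (one_l n) (fun u m => snd u m <> 0) mu).
        + intros u Hu. unfold ratio_set in Rm. rewrite Forall_forall in Rm.
          destruct (Rm u Hu) as [[Hs _] _]. exact Hs.
        + intros m [x [Hx Hm]]. destruct (Gm x Hx) as [k [_ [_ Ex]]].
          apply NNPP. intro Hn. apply Hm. rewrite Ex. apply snd_monpow_zero.
          intros u Hu. apply NNPP. intro Hu'. apply Hn. exists u; auto. }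
    destruct (IHn Sg HS) as [D [[HDv HDs] [HDh [HSD HDk]]]].
    exists (fun z => A z \/ exists y, D y /\ z = emb n y).
    split; [split|split; [|split]].
    + intros z [Hz|[y [Hy ->]]]; auto. apply emb_valid; auto.
    + apply (subgrid_union (level (S n)) (one_l (S n))); auto.
      apply subgrid_emb; auto. apply emb_valid.
    + intros x [Hx|[y [Hy ->]]] m Hm.
      * right. exists m. split; auto. apply HSD. exists x; auto.
      * destruct n as [|n'].
        -- exfalso. apply Hm. reflexivity.
        -- change (push (emb n') (snd y) m <> 0) in Hm.
           destruct (push_out _ _ _ Hm) as [m1 [E1 H1]]. subst m.
           right. exists (emb n' m1). split; auto. apply (HDh y Hy m1 H1).
    + intros m Hm; left; auto.
    + intros k Hk m [Hm|[y [Hy ->]]]; auto.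
      apply inG_emb. apply (inG_mono _ (pred k)); [|lia].
      apply HDk; auto. intros m [x [Hx Hm]]. eapply inG_snd; eauto.
Qed.

Lemma least (P : nat -> Prop) : (exists k, P k) -> exists h, P h /\ forall k, P k -> (h <= k)%nat.
Proof.
  intros [k Hk]. destruct (classic (exists h, P h /\ forall k, P k -> (h <= k)%nat)) as [H|Hn]; auto.
  exfalso. assert (Hall : forall n j, (j <= n)%nat -> ~ P j).
  { induction n; intros j Hj Pj; apply Hn; exists j; split; auto; intros k' Pk';
    destruct (le_lt_dec j k'); auto; exfalso.
    - lia.
    - apply (IHn k'); auto; lia. }
  apply (Hall k k); auto.
Qed.

Theorem proposition2p21 (N : nat) (A : car (level N) -> Prop) :
  logfree_subgrid N A ->
  exists (d : nat) (B : car (level (d + N)) -> Prop) (h : nat),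
    logfree_subgrid (d + N) B /\
    hereditary (d + N) B /\
    (forall m, A m -> B (emb_up N d m)) /\
    is_height N A h /\ is_height (d + N) B h.
Proof.
  intros HA. destruct (closure N A HA) as [B [HB [HBh [HAB HBk]]]].
  destruct (least (fun k => forall m, A m -> inG N k m)) as [h [Hh Hmin]].
  { exists N. intros m Hm. apply inG_top. apply HA; auto. }
  exists 0%nat, B, h. split; [exact HB|]. split; [exact HBh|]. split; [exact HAB|].
  split.
  - split; auto.
  - split. apply HBk; auto.
    intros k Hk. apply Hmin. intros m Hm. apply Hk. apply HAB; auto.
Qed.
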